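(* Let $G$ be a finite group and let $\mathsf{T}$ be a $G$-transfer system. Then any two minimal generating sets of $\mathsf{T}$ have the same cardinality. Consequently there is a well-defined map $\mathfrak{m}$ from the set of $G$-transfer systems to $\mathbb{N}$ sending a transfer system $\mathsf{T}$ to the cardinality of a minimal generating set of $\mathsf{T}$.
   Context: For a finite group $G$, an arrow is a pair $(H,K)$ of subgroups of $G$ with $H \leqslant K$; it is an identity arrow if $H=K$. A $G$-transfer system is a set $\mathsf{T}$ of arrows which contains all identity arrows and is closed under: composition (if $(H,K),(K,L)\in\mathsf{T}$ then $(H,L)\in\mathsf{T}$); conjugation (if $(H,K)\in\mathsf{T}$ then $(gHg^{-1},gKg^{-1})\in\mathsf{T}$ for all $g\in G$); restriction (if $(H,K)\in\mathsf{T}$ and $L\leqslant K$ then $(H\cap L,L)\in\mathsf{T}$). For a set $S$ of non-identity arrows, $\langle S\rangle$ denotes the smallest $G$-transfer system containing $S$. A minimal generating set for a transfer system $\mathsf{T}$ is a set $S\subseteq\mathsf{T}$ of non-identity arrows with $\langle S\rangle=\mathsf{T}$ and $\langle S\setminus\{s\}\rangle\subsetneq\mathsf{T}$ for every $s\in S$. *)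

(* Defs.v *)
From mathcomp Require Import all_boot all_fingroup.
Set Implicit Arguments. Unset Strict Implicit. Unset Printing Implicit Defensive.
Import GroupScope.

Definition arrow (gT : finGroupType) := ({group gT} * {group gT})%type.

Definition is_arrow (gT : finGroupType) (G : {group gT}) (a : arrow gT) : bool :=
  (a.1 \subset a.2) && (a.2 \subset G).

Definition is_identity_arrow (gT : finGroupType) (a : arrow gT) : bool :=
  a.1 == a.2.

Definition transfer_systemb (gT : finGroupType) (G : {group gT})
    (T : {set arrow gT}) : bool :=
  [&& [forall a in T, is_arrow G a],
      [forall H : {group gT}, (H \subset G) ==> ((H, H) \in T)],
      [forall H : {group gT}, forall K : {group gT}, forall L : {group gT},
          ((H, K) \in T) && ((K, L) \in T) ==> ((H, L) \in T)],
      [forall H : {group gT}, forall K : {group gT}, forall g : gT,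
          ((H, K) \in T) && (g \in G) ==> (((H :^ g)%G, (K :^ g)%G) \in T)] &
      [forall H : {group gT}, forall K : {group gT}, forall L : {group gT},
          ((H, K) \in T) && (L \subset K) ==> (((H :&: L)%G, L) \in T)]].

Definition transfer_system (gT : finGroupType) (G : {group gT})
    (T : {set arrow gT}) : Prop := transfer_systemb G T.

Definition generated (gT : finGroupType) (G : {group gT})
    (S : {set arrow gT}) : {set arrow gT} :=
  [set a | [forall T : {set arrow gT},
     (S \subset T) && transfer_systemb G T ==> (a \in T)]].

Definition minimal_generating_set (gT : finGroupType) (G : {group gT})
    (T S : {set arrow gT}) : Prop :=
  [/\ S \subset T,
      (forall a, a \in S -> ~~ is_identity_arrow a),
      generated G S = T &
      (forall s, s \in S -> generated G (S :\ s) \proper T)].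

(* Main.v *)
Require Import Defs.
From mathcomp Require Import all_boot all_fingroup zify.
Set Implicit Arguments. Unset Strict Implicit. Unset Printing Implicit Defensive.
Import GroupScope.

Section TS.
Variables (gT : finGroupType) (G : {group gT}).
Implicit Types (T : {set arrow gT}) (a b q m p : arrow gT) (H K L M : {group gT}).

Definition conjA (g : gT) a : arrow gT := ((a.1 :^ g)%G, (a.2 :^ g)%G).
Definition resA L a : arrow gT := ((a.1 :&: L)%G, L).

Lemma arrow_eq a b : gval a.1 = gval b.1 -> gval a.2 = gval b.2 -> a = b.
Proof. by case: a b => [a1 a2] [b1 b2] /= e1 e2; congr pair; apply: val_inj. Qed.

Lemma ts_arr T a : transfer_systemb G T -> a \in T -> (a.1 \subset a.2) && (a.2 \subset G).
Proof. by case/and5P => /forall_inP h _ _ _ _ /h. Qed.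

Lemma ts_id T H : transfer_systemb G T -> H \subset G -> (H, H) \in T.
Proof. by case/and5P => _ /forallP h _ _ _; apply/implyP. Qed.

Lemma ts_comp T H K L : transfer_systemb G T -> (H, K) \in T -> (K, L) \in T -> (H, L) \in T.
Proof.
case/and5P => _ _ /forallP h _ _ hk kl.
by move: (h H) => /forallP/(_ K)/forallP/(_ L)/implyP; apply; rewrite hk kl.
Qed.

Lemma ts_conj T a g : transfer_systemb G T -> a \in T -> g \in G -> conjA g a \in T.
Proof.
case/and5P => _ _ _ /forallP h _; case: a => A B hab hg.
by move: (h A) => /forallP/(_ B)/forallP/(_ g)/implyP; apply; rewrite hab hg.
Qed.

Lemma ts_res T a L : transfer_systemb G T -> a \in T -> L \subset a.2 -> resA L a \in T.
Proof.
case/and5P => _ _ _ _ /forallP h; case: a => A B hab hL.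
by move: (h A) => /forallP/(_ B)/forallP/(_ L)/implyP; apply; rewrite hab hL.
Qed.

Definition rel1 q m : bool :=
  [exists g in G, exists L : {group gT}, (L \subset q.2 :^ g) && (m == resA L (conjA g q))].

Lemma rel1_T T q m : transfer_systemb G T -> q \in T -> rel1 q m -> m \in T.
Proof.
move=> hT hq /exists_inP[g hg /existsP[L /andP[hL /eqP->]]].
by apply: ts_res => //; apply: ts_conj.
Qed.

Lemma rel1_trans q m p : rel1 q m -> rel1 m p -> rel1 q p.
Proof.
move=> /exists_inP[g hg /existsP[L /andP[hL /eqP->]]].
move=> /exists_inP[h hh /existsP[L' /andP[hL' /eqP->]]].
apply/exists_inP; exists (g * h); first exact: groupM.
apply/existsP; exists L'; apply/andP; split.
  rewrite conjsgM; apply: subset_trans hL' _; rewrite /= conjSg //.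
apply/eqP/arrow_eq => //=.
move: hL'; rewrite /= conjIg conjsgM => hL'.
by rewrite -setIA (setIidPr hL').
Qed.

Lemma rel1_refl q : q.1 \subset q.2 -> rel1 q q.
Proof.
move=> h; apply/exists_inP; exists 1; first exact: group1.
apply/existsP; exists q.2; rewrite /= conjsg1 subxx /=.
by apply/eqP/arrow_eq => //=; rewrite !conjsg1 (setIidPl h).
Qed.

Lemma rel1_res q L : L \subset q.2 -> rel1 q (resA L q).
Proof.
move=> h; apply/exists_inP; exists 1; first exact: group1.
apply/existsP; exists L; rewrite /= conjsg1 h /=.
by apply/eqP/arrow_eq => //=; rewrite !conjsg1.
Qed.

Lemma conjAK a g : conjA g^-1 (conjA g a) = a.
Proof. by apply: arrow_eq => /=; rewrite ?conjsgK. Qed.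

Lemma conjA_res L a g : conjA g (resA L a) = resA (L :^ g)%G (conjA g a).
Proof. by apply: arrow_eq => //=; rewrite conjIg. Qed.

Lemma conjA_M a g h : conjA h (conjA g a) = conjA (g * h) a.
Proof. by apply: arrow_eq => /=; rewrite conjsgM. Qed.

Lemma rel1_sub q m : rel1 q m -> m.1 \subset m.2.
Proof. by move=> /exists_inP[g hg /existsP[L /andP[hL /eqP->]]]; apply: subsetIr. Qed.

Lemma rel1_conj q m g : g \in G -> rel1 q m -> rel1 q (conjA g m).
Proof.
move=> hg hqm; have hs := rel1_sub hqm; apply: rel1_trans hqm _.
apply/exists_inP; exists g => //; apply/existsP; exists (m.2 :^ g)%G.
rewrite subxx /=; apply/eqP/arrow_eq => //=.
by rewrite -conjIg (setIidPl hs).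
Qed.

Lemma arith (x y z n : nat) : x < z -> y < x -> z - y < n.+1 -> x - y < n /\ z - x < n.
Proof. lia. Qed.

Lemma grp_eqE H K : (H == K) = (gval H == gval K).
Proof. by rewrite -val_eqE. Qed.

Lemma ltcard H K : H \subset K -> H != K -> #|H| < #|K|.
Proof. by move=> s n; apply: proper_card; rewrite properEneq -grp_eqE n. Qed.

Variable T : {set arrow gT}.
Hypothesis tsT : transfer_systemb G T.

Definition primeb a : bool := [&& a \in T, a.1 != a.2 &
  [forall M : {group gT}, ((a.1, M) \in T) && ((M, a.2) \in T) ==> (M == a.1) || (M == a.2)]].

Definition maxp m : bool := primeb m &&
  [forall q : arrow gT, primeb q && rel1 q m ==> (#|q.2| == #|m.2|)].

Lemma dec H K : (H, K) \in T -> H != K -> ~~ primeb (H, K) ->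
  exists M : {group gT}, [/\ (H, M) \in T, (M, K) \in T, M != H & M != K].
Proof.
move=> hT hn; rewrite /primeb hT hn /= negb_forall => /existsP[M].
rewrite negb_imply negb_or => /andP[/andP[h1 h2] /andP[h3 h4]].
by exists M.
Qed.

Lemma T_sub a : a \in T -> a.1 \subset a.2.
Proof. by move/(ts_arr tsT)/andP=> []. Qed.

Lemma T_subG a : a \in T -> a.2 \subset G.
Proof. by move/(ts_arr tsT)/andP=> []. Qed.

Lemma prime_conj a g : g \in G -> primeb a -> primeb (conjA g a).
Proof.
move=> hg /and3P[hT hn /forallP hf]; apply/and3P; split.
- exact: ts_conj.
- apply: contra hn; rewrite !grp_eqE /= => /eqP e.
  by rewrite -(conjsgK g a.1) e conjsgK.
apply/forallP => M; apply/implyP => /andP[h1 h2].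
have e1 : ((a.1, (M :^ g^-1)%G) : arrow gT) = conjA g^-1 ((a.1 :^ g)%G, M).
  by apply: arrow_eq => /=; rewrite ?conjsgK.
have e2 : (((M :^ g^-1)%G, a.2) : arrow gT) = conjA g^-1 (M, (a.2 :^ g)%G).
  by apply: arrow_eq => /=; rewrite ?conjsgK.
have hg' : g^-1 \in G by rewrite groupV.
have := hf (M :^ g^-1)%G; rewrite e1 e2 !ts_conj //= !grp_eqE /=.
by case/orP=> /eqP e; apply/orP; [left|right]; rewrite -e conjsgKV.
Qed.

Lemma maxp_conj m g : g \in G -> maxp m -> maxp (conjA g m).
Proof.
move=> hg /andP[hp /forallP hf]; apply/andP; split; first exact: prime_conj.
apply/forallP => q; apply/implyP => /andP[hq hr].
have hg' : g^-1 \in G by rewrite groupV.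
have := rel1_conj hg' hr; rewrite conjAK => hr'.
by have /implyP := hf q; rewrite hq hr' /= cardJg; apply.
Qed.

Lemma split_res H K M L : (H, M) \in T -> (M, K) \in T -> L \subset K ->
  primeb (resA L (H, K)) -> (L \subset M) \/ (M :&: L = H :&: L).
Proof.
move=> hHM hMK hL /and3P[_ _ /forallP/(_ (M :&: L)%G)] /=.
have hs : H \subset M := T_sub hHM.
have e : (((H :&: L)%G, (M :&: L)%G) : arrow gT) = resA (M :&: L)%G (H, M).
  by apply: arrow_eq => //=; rewrite setIA (setIidPl hs).
rewrite e ts_res //= ?subsetIl //.
have -> : (((M :&: L)%G, L) : arrow gT) = resA L (M, K) by [].
rewrite ts_res //= !grp_eqE /= => /orP[/eqP e1|/eqP e2]; first by right.
by left; rewrite -e2 subsetIl.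
Qed.

Lemma LA H K L : (H, K) \in T -> L \subset K -> maxp (resA L (H, K)) -> H \subset L.
Proof.
have [n] := ubnP (#|K| - #|H|); elim: n H K L => // n IH H K L hn hT hL hm.
have hHK : H \subset K := T_sub hT.
case: (boolP (primeb (H, K))) => hp.
  have /andP[_ /forallP/(_ (H, K))] := hm.
  rewrite hp rel1_res //= => /eqP e.
  have : L == K :> {set gT} by rewrite eqEcard hL e leqnn.
  by move/eqP->.
case: (eqVneq H K) => e.
  move: hm => /andP[/and3P[_ + _] _]; rewrite /= grp_eqE /=.
  by rewrite e (setIidPr hL) eqxx.
have [M [hHM hMK nMH nMK]] := dec hT e hp.
have sHM : H \subset M := T_sub hHM; have sMK : M \subset K := T_sub hMK.
have nHM : H != M by rewrite eq_sym.
have c1 := ltcard sMK nMK; have c2 := ltcard sHM nHM.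
have c3 := subset_leq_card sHM.
have [m1 m2] := arith c1 c2 hn.
case: (split_res hHM hMK hL (andP hm).1) => [hLM|e2].
  exact: (IH H M L m1 hHM hLM hm).
have e3 : resA L (H, K) = resA L (M, K) by apply: arrow_eq => //=.
rewrite e3 in hm.
have sML := IH M K L m2 hMK hL hm.
exact: subset_trans sHM sML.
Qed.

Lemma maxp_prime m : maxp m -> primeb m.
Proof. by case/andP. Qed.

Lemma maxp_top H K L : primeb (H, K) -> L \subset K -> maxp (resA L (H, K)) -> gval L = gval K.
Proof.
move=> hp hL /andP[_ /forallP/(_ (H, K))]; rewrite hp rel1_res //= => /eqP e.
by apply/eqP; rewrite eqEcard hL e leqnn.
Qed.

Lemma maxp_nid H L : L \subset H -> ~~ maxp (resA L (H, H)).
Proof.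
move=> hL; apply/negP => /andP[/and3P[_ + _] _]; rewrite /= grp_eqE /=.
by rewrite (setIidPr hL) eqxx.
Qed.

Lemma LB H M K L : (H, M) \in T -> (M, K) \in T -> M != H -> L \subset K ->
  maxp (resA L (H, K)) -> L \subset M.
Proof.
move=> hHM hMK nMH hL hm.
case: (split_res hHM hMK hL (maxp_prime hm)) => // e.
have hHK := ts_comp tsT hHM hMK.
have sHL := LA hHK hL hm.
have e3 : resA L (H, K) = resA L (M, K) by apply: arrow_eq => //=.
rewrite e3 in hm; have sML := LA hMK hL hm.
move: e; rewrite (setIidPl sHL) (setIidPl sML) => e.
by move: nMH; rewrite grp_eqE e eqxx.
Qed.

Lemma cover1 H K L1 L2 : (H, K) \in T -> L1 \subset K -> L2 \subset K ->
  maxp (resA L1 (H, K)) -> maxp (resA L2 (H, K)) -> resA L1 (H, K) = resA L2 (H, K).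
Proof.
have [n] := ubnP (#|K| - #|H|); elim: n H K L1 L2 => // n IH H K L1 L2 hn hT hL1 hL2 hm1 hm2.
case: (boolP (primeb (H, K))) => hp.
  by apply: arrow_eq => //=; rewrite (maxp_top hp hL1 hm1) (maxp_top hp hL2 hm2).
case: (eqVneq H K) => e.
  by move: hm1 hL1; rewrite -e => hm1 hL1; rewrite (negbTE (maxp_nid hL1)) in hm1.
have [M [hHM hMK nMH nMK]] := dec hT e hp.
have sHM : H \subset M := T_sub hHM; have sMK : M \subset K := T_sub hMK.
have nHM : H != M by rewrite eq_sym.
have c1 := ltcard sMK nMK; have c2 := ltcard sHM nHM.
have [m1 m2] := arith c1 c2 hn.
have l1 := LB hHM hMK nMH hL1 hm1; have l2 := LB hHM hMK nMH hL2 hm2.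
exact: (IH H M L1 L2 m1 hHM l1 l2 hm1 hm2).
Qed.

Lemma cover y m1 m2 : y \in T -> rel1 y m1 -> rel1 y m2 -> maxp m1 -> maxp m2 -> rel1 m1 m2.
Proof.
move=> hy /exists_inP[g1 hg1 /existsP[L1 /andP[hL1 /eqP e1]]].
move=> /exists_inP[g2 hg2 /existsP[L2 /andP[hL2 /eqP e2]]] hm1 hm2.
set h := g2^-1 * g1.
have hh : h \in G by rewrite groupM ?groupV.
have e : conjA h m2 = resA (L2 :^ h)%G (conjA g1 y).
  by rewrite e2; apply: arrow_eq => //=; rewrite conjIg -conjsgM /h mulVKg.
have hL2' : (L2 :^ h)%G \subset (conjA g1 y).2.
  have -> : (conjA g1 y).2 :=: ((y.2 :^ g2) :^ h)%g by rewrite /= -conjsgM /h mulVKg.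
  by rewrite conjSg.
have hy' : conjA g1 y \in T by apply: ts_conj.
have hm2' := maxp_conj hh hm2; rewrite e in hm2'.
rewrite e1 in hm1.
have := cover1 hy' hL1 hL2' hm1 hm2'.
rewrite -e -e1 => e3.
have hs : m1.1 \subset m1.2 by rewrite e1 /= subsetIr.
have := rel1_conj (g := h^-1) (groupVr hh) (rel1_refl hs).
by rewrite e3 conjAK.
Qed.

Definition inR (X : {set arrow gT}) m : bool := [exists x in X, rel1 x m].

Lemma rel1_card q m : rel1 q m -> #|m.2| <= #|q.2|.
Proof.
move=> /exists_inP[g hg /existsP[L /andP[hL /eqP->]]] /=.
by rewrite -(cardJg q.2 g); apply: subset_leq_card.
Qed.

Lemma exists_max p : primeb p -> exists m, maxp m && rel1 m p.
Proof.
have [n] := ubnP (#|gT| - #|p.2|); elim: n p => // n IH p hn hp.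
case: (boolP (maxp p)) => hm.
  exists p; rewrite hm /= rel1_refl //; apply: T_sub; by case/and3P: hp.
move: hm; rewrite /maxp hp /= negb_forall => /existsP[q].
rewrite negb_imply => /andP[/andP[hq hqp] hne].
have c1 := rel1_card hqp.
have c2 : #|q.2| <= #|gT| by apply: max_card.
have c3 : #|gT| - #|q.2| < n.
  move: c1 c2 hn hne; move: #|gT| #|q.2| #|p.2| => x y z.
  move=> a b c /eqP d; lia.
have [m /andP[hm hmq]] := IH q c3 hq.
by exists m; apply/andP; split; last exact: (rel1_trans hmq hqp).
Qed.

Lemma prime_nid H L : L \subset H -> ~~ primeb (resA L (H, H)).
Proof.
move=> hL; apply/negP => /and3P[_ + _]; rewrite /= grp_eqE /=.
by rewrite (setIidPr hL) eqxx.
Qed.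

Lemma prime_in p : primeb p -> p \in T.
Proof. by case/and3P. Qed.

Lemma gen_cover (S : {set arrow gT}) p : S \subset T -> Defs.generated G S = T -> primeb p -> inR S p.
Proof.
move=> sST hgen hp.
pose U := [set a in T | [forall L : {group gT},
   (L \subset a.2) && primeb (resA L a) ==> inR S (resA L a)]].
have tsU : transfer_systemb G U.
  apply/and5P; split.
  - by apply/forall_inP => a; rewrite inE => /andP[/(ts_arr tsT)].
  - apply/forallP => H; apply/implyP => hH; rewrite inE ts_id //=.
    apply/forallP => L; apply/implyP => /andP[hL].
    by rewrite (negbTE (prime_nid hL)).
  - apply/forallP => H; apply/forallP => K; apply/forallP => L0.
    apply/implyP => /andP[]; rewrite !inE => /andP[h1 /forallP f1] /andP[h2 /forallP f2].
    rewrite (ts_comp tsT h1 h2) /=; apply/forallP => L; apply/implyP => /andP[hL hpr].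
    case: (split_res h1 h2 hL hpr) => [hLK|e].
      by have /implyP := f1 L; apply; rewrite hLK.
    have e3 : resA L (H, L0) = resA L (K, L0) by apply: arrow_eq => //=.
    by rewrite e3 in hpr *; have /implyP := f2 L; apply; rewrite hL hpr.
  - apply/forallP => H; apply/forallP => K; apply/forallP => g.
    apply/implyP => /andP[]; rewrite !inE => /andP[h1 /forallP f1] hg.
    have -> : (((H :^ g)%G, (K :^ g)%G) : arrow gT) = conjA g (H, K) by [].
    rewrite ts_conj //=; apply/forallP => L; apply/implyP => /andP[hL hpr].
    have hL' : (L :^ g^-1)%G \subset K by rewrite /= sub_conjgV.
    have e : resA L (conjA g (H, K)) = conjA g (resA (L :^ g^-1)%G (H, K)).
      by apply: arrow_eq => /=; rewrite ?conjIg conjsgKV.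
    rewrite e in hpr *.
    have hg' : g^-1 \in G by rewrite groupV.
    have := prime_conj hg' hpr; rewrite conjAK => hpr'.
    have /implyP := f1 (L :^ g^-1)%G; rewrite hL' hpr' => /(_ isT).
    by case/exists_inP => s hs hr; apply/exists_inP; exists s => //; apply: rel1_conj.
  - apply/forallP => H; apply/forallP => K; apply/forallP => L.
    apply/implyP => /andP[]; rewrite !inE => /andP[h1 /forallP f1] hL.
    have -> : (((H :&: L)%G, L) : arrow gT) = resA L (H, K) by [].
    rewrite ts_res //=; apply/forallP => L'; apply/implyP => /andP[hL' hpr].
    have e : resA L' (resA L (H, K)) = resA L' (H, K).
      by apply: arrow_eq => //=; rewrite -setIA (setIidPr hL').
    rewrite e in hpr *.
    by have /implyP := f1 L'; apply; rewrite (subset_trans hL' hL) hpr.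
have sSU : S \subset U.
  apply/subsetP => s hs; rewrite inE (subsetP sST _ hs) /=.
  apply/forallP => L; apply/implyP => /andP[hL _].
  by apply/exists_inP; exists s => //; apply: rel1_res.
have : p \in Defs.generated G S by rewrite hgen prime_in.
rewrite inE => /forallP/(_ U); rewrite sSU tsU /= inE => /andP[hpT /forallP/(_ p.2)].
have hs := T_sub hpT.
have e : resA p.2 p = p by apply: arrow_eq => //=; rewrite (setIidPl hs).
by rewrite e subxx hp; apply.
Qed.

Lemma irred (S : {set arrow gT}) x : S \subset T -> Defs.generated G S = T -> x \in S ->
  Defs.generated G (S :\ x) \proper T ->
  exists m, [&& maxp m, rel1 x m & ~~ inR (S :\ x) m].
Proof.
move=> sST hgen hx hpr.
case: (boolP [exists m, [&& maxp m, rel1 x m & ~~ inR (S :\ x) m]]).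
  by case/existsP => m hm; exists m.
rewrite negb_exists => /forallP hall.
move: hpr; rewrite properE => /andP[_ /negP]; case.
apply/subsetP => a ha; rewrite inE; apply/forallP => T'.
apply/implyP => /andP[sub tsT'].
have step1 : forall m, maxp m -> m \in T'.
  move=> m hm; have /exists_inP[s hs hsm] := gen_cover sST hgen (maxp_prime hm).
  case: (eqVneq s x) => [esx|nsx].
    have := hall m; rewrite hm -esx hsm /= negbK => /exists_inP[s' hs' hr].
    by apply: (rel1_T tsT' _ hr); apply: (subsetP sub); rewrite -esx.
  apply: (rel1_T tsT' _ hsm); apply: (subsetP sub); by rewrite !inE nsx.
have step2 : forall p, primeb p -> p \in T'.
  move=> p hp; have [m /andP[hm hmp]] := exists_max hp.
  exact: (rel1_T tsT' (step1 m hm) hmp).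
move: ha; case: a => H K.
have [n] := ubnP (#|K| - #|H|); elim: n H K => // n IH H K hn hT.
case: (boolP (primeb (H, K))) => hp; first exact: step2.
case: (eqVneq H K) => e.
  rewrite -e; apply: (ts_id tsT'); rewrite e; exact: (T_subG hT).
have [M [hHM hMK nMH nMK]] := dec hT e hp.
have sHM : H \subset M := T_sub hHM; have sMK : M \subset K := T_sub hMK.
have nHM : H != M by rewrite eq_sym.
have c1 := ltcard sMK nMK; have c2 := ltcard sHM nHM.
have [m1 m2] := arith c1 c2 hn.
exact: (ts_comp tsT' (IH H M m1 hHM) (IH M K m2 hMK)).
Qed.

Lemma le_card (S1 S2 : {set arrow gT}) :
  minimal_generating_set G T S1 -> minimal_generating_set G T S2 -> #|S1| <= #|S2|.
Proof.
case=> s1T _ g1 irr1 [s2T _ g2 _].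
pose P x y := [exists m, [&& maxp m, rel1 x m, ~~ inR (S1 :\ x) m & rel1 y m]].
pose f x := odflt x [pick y in S2 | P x y].
have hf : forall x, x \in S1 -> (f x \in S2) && P x (f x).
  move=> x hx; rewrite /f; case: pickP => [y /andP[]|] //= hnone.
  have [m /and3P[hm hxm hn]] := irred s1T g1 hx (irr1 x hx).
  have /exists_inP[y hy hym] := gen_cover s2T g2 (maxp_prime hm).
  have := hnone y; rewrite hy /= => hPf.
  suff hP : P x y by rewrite hP in hPf.
  by rewrite /P; apply/existsP; exists m; rewrite hm hxm hn hym.
have inj : {in S1 &, injective f}.
  move=> x x' hx hx' e; apply/eqP; apply/negPn/negP => nxx.
  have /andP[hy /existsP[m /and4P[hm hxm hn hym]]] := hf x hx.
  have /andP[_ /existsP[m' /and4P[hm' hxm' hn' hym']]] := hf x' hx'.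
  rewrite -e in hym'.
  have hmm := cover (subsetP s2T _ hy) hym hym' hm hm'.
  move/negP: hn'; apply; apply/exists_inP; exists x.
    by rewrite !inE nxx hx.
  exact: rel1_trans hxm hmm.
rewrite -(card_in_imset inj); apply: subset_leq_card.
by apply/subsetP => y /imsetP[x hx ->]; case/andP: (hf x hx).
Qed.
End TS.

Theorem corollary2p14 (gT : finGroupType) (G : {group gT})
    (T S1 S2 : {set arrow gT}) :
  transfer_system G T ->
  minimal_generating_set G T S1 ->
  minimal_generating_set G T S2 ->
  #|S1| = #|S2|.
Proof.
move=> hT h1 h2; apply/eqP; rewrite eqn_leq.
by rewrite (le_card hT h1 h2) (le_card hT h2 h1).
Qed.
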